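(* Let $G$ be a profinite group and $H\subseteq G$ an open subgroup (of finite index). Let $X$ and $Y$ be discrete $G$-modules and let $f:X\to Y$ be a homomorphism that is $H$-linear (but not necessarily $G$-linear). Define the $G$-linear map $\tilde f:X\to Y$ by $\tilde f(x)=\sum_{gH\in G/H}g f g^{-1}(x)$. Then for every $n\geq 0$ and every $\sigma\in H^n(G,X)$, $$\operatorname{Cor}_H^G\big(f_*\operatorname{Res}_H^G\sigma\big)=\tilde f_*\sigma.$$
   Context: $\operatorname{Res}_H^G$ and $\operatorname{Cor}_H^G$ denote restriction and corestriction in continuous group cohomology; $f_*$ denotes the map on cohomology induced by a module homomorphism. The term $gfg^{-1}$ depends only on the coset $gH$ since $f$ is $H$-linear. *)

(* Defs.v *)
From HB Require Import structures.
From mathcomp Require Import all_boot all_algebra.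
From mathcomp Require monoid.
From mathcomp Require Import all_classical topology.

Set Implicit Arguments.
Unset Strict Implicit.
Unset Printing Implicit Defensive.

Import GRing.Theory.
Local Open Scope classical_set_scope.
Local Open Scope ring_scope.

(* A group carrying a topology (continuity axioms are imposed in [profinite]). *)
#[short(type="topGroupType")]
HB.structure Definition TopGroup := {G of monoid.Group G & Topological G}.

Section Defs.
Variable G : topGroupType.

Local Notation "x ** y" := (@monoid.mul G x y) (at level 40, left associativity).
Local Notation "x ^-1g" := (@monoid.inv G x) (at level 3).
Local Notation one := (@monoid.one G).

Definition profinite : Prop :=
  [/\ continuous (fun p : G * G => p.1 ** p.2),
      continuous (fun x : G => x ^-1g),
      compact [set: G], hausdorff_space G & totally_disconnected [set: G]].

Definition open_subgroup (H : set G) : Prop :=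
  [/\ H one, (forall x y, H x -> H y -> H (x ** y)),
      (forall x, H x -> H (x ^-1g)) & open H].

(* Discrete G-module: abelian group X with a G-action by additive maps,
   such that every stabilizer is open (i.e. G x X -> X continuous, X discrete). *)
Definition discrete_module (X : zmodType) (act : G -> X -> X) : Prop :=
  [/\ (forall g x y, act g (x + y) = act g x + act g y),
      (forall x, act one x = x),
      (forall g h x, act (g ** h) x = act g (act h x)) &
      (forall x, open [set g | act g x = x])].

(* Homogeneous n-cochains: maps G^{n+1} -> X, with G^{n+1} = ('I_n.+1 -> G). *)
Definition equivariant (X : zmodType) (act : G -> X -> X) (n : nat)
  (phi : ('I_n.+1 -> G) -> X) : Prop :=
  forall g x, phi (fun i => g ** x i) = act g (phi x).

(* Continuity into the discrete module X = local constancy on the product G^{n+1}. *)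
Definition loc_const (X : Type) (n : nat) (phi : ('I_n.+1 -> G) -> X) : Prop :=
  forall x, exists U : 'I_n.+1 -> set G,
    (forall i, open (U i) /\ U i (x i)) /\
    (forall y, (forall i, U i (y i)) -> phi y = phi x).

Definition dco (X : zmodType) (n : nat) (phi : ('I_n.+1 -> G) -> X)
  : ('I_n.+2 -> G) -> X :=
  fun x => \sum_(i < n.+2)
    (if odd i then - phi (fun j => x (lift i j)) else phi (fun j => x (lift i j))).

Definition cocycle (X : zmodType) (act : G -> X -> X) (n : nat)
  (phi : ('I_n.+1 -> G) -> X) : Prop :=
  [/\ equivariant act phi, loc_const phi & forall x, dco phi x = 0].

Definition cohomologous (X : zmodType) (act : G -> X -> X) (n : nat)
  : (('I_n.+1 -> G) -> X) -> (('I_n.+1 -> G) -> X) -> Prop :=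
  match n with
  | 0 => fun phi psi => forall x, phi x = psi x
  | k.+1 => fun phi psi =>
      exists chi : ('I_k.+1 -> G) -> X,
        [/\ equivariant act chi, loc_const chi & forall x, phi x - psi x = dco chi x]
  end.

Definition left_transversal (H : set G) (I : finType) (L : I -> G) : Prop :=
  forall g, exists! i, H ((L i) ^-1g ** g).

(* pi : G -> H with pi (h g) = h pi(g); equivalently pi g = g r(g)^-1 for a
   system r of representatives of the right cosets H\G. *)
Definition right_retraction (H : set G) (pi : G -> G) : Prop :=
  forall g, H (pi g) /\ forall h, H h -> pi (h ** g) = h ** pi g.

(* Restriction to H: an H-cochain is represented by a function on G^{n+1}
   that is only ever evaluated on tuples in H^{n+1}. *)
Definition res_cochain (X : Type) (n : nat) (phi : ('I_n.+1 -> G) -> X)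
  : ('I_n.+1 -> G) -> X := fun x => phi x.

Definition push (X Y : Type) (f : X -> Y) (n : nat) (phi : ('I_n.+1 -> G) -> X)
  : ('I_n.+1 -> G) -> Y := fun x => f (phi x).

Definition cor_cochain (Y : zmodType) (act : G -> Y -> Y) (I : finType) (L : I -> G)
  (pi : G -> G) (n : nat) (psi : ('I_n.+1 -> G) -> Y) : ('I_n.+1 -> G) -> Y :=
  fun x => \sum_(i : I) act (L i) (psi (fun j => pi ((L i) ^-1g ** x j))).

Definition ftilde (X Y : zmodType) (actX : G -> X -> X) (actY : G -> Y -> Y)
  (I : finType) (L : I -> G) (f : X -> Y) : X -> Y :=
  fun x => \sum_(i : I) actY (L i) (f (actX ((L i) ^-1g) x)).

End Defs.

(* Main.v *)
Require Import Defs.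
From HB Require Import structures.
From mathcomp Require Import all_boot all_algebra.
From mathcomp Require monoid.
From mathcomp Require Import all_classical topology.
From mathcomp Require Import zify.
Set Implicit Arguments. Unset Strict Implicit. Unset Printing Implicit Defensive.
Import GRing.Theory.
Local Open Scope ring_scope.

Section Top.
Variable G : topGroupType.
Local Notation "x ** y" := (@monoid.mul G x y) (at level 40, left associativity).
Local Notation "x ^-1g" := (@monoid.inv G x) (at level 3).

Lemma rmul_cont (hm : continuous (fun p : G * G => p.1 ** p.2)) (a : G) :
  continuous (fun y : G => y ** a).
Proof.
move=> y.
apply: (@continuous_comp _ _ _ (fun y : G => (y, a)) (fun p : G * G => p.1 ** p.2)).
  apply: cvg_pair; [exact: cvg_id | exact: cvg_cst].
exact: hm.
Qed.

Lemma lmul_cont (hm : continuous (fun p : G * G => p.1 ** p.2)) (a : G) :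
  continuous (fun y : G => a ** y).
Proof.
move=> y.
apply: (@continuous_comp _ _ _ (fun y : G => (a, y)) (fun p : G * G => p.1 ** p.2)).
  apply: cvg_pair; [exact: cvg_cst | exact: cvg_id].
exact: hm.
Qed.

Definition lc (q : G -> G) := forall a (V : set G), open V -> V (q a) ->
  exists U : set G, [/\ open U, U a & forall y, U y -> V (q y)].

Lemma cont_lc q : continuous q -> lc q.
Proof.
move=> cq a V oV Va; exists (q @^-1` V)%classic; split => //.
by apply: open_comp => // x _; exact: cq.
Qed.
End Top.

Set Implicit Arguments. Unset Strict Implicit. Unset Printing Implicit Defensive.
Import GRing.Theory.
Local Open Scope ring_scope.

Section Sg.
Variable X : zmodType.
Definition sg (m : nat) (a : X) := if odd m then - a else a.
Lemma sgS m a : sg m.+1 a = - sg m a.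
Proof. by rewrite /sg /=; case: (odd m); rewrite ?opprK. Qed.
Lemma sgN m a : sg m (- a) = - sg m a.
Proof. by rewrite /sg; case: (odd m). Qed.
Lemma sgD m a b : sg m (a + b) = sg m a + sg m b.
Proof. by rewrite /sg; case: (odd m); rewrite ?opprD. Qed.
Lemma sg0 m : sg m 0 = 0.
Proof. by rewrite /sg; case: (odd m); rewrite ?oppr0. Qed.
Lemma sgC m j a : sg m (sg j a) = sg j (sg m a).
Proof. by rewrite /sg; case: (odd m); case: (odd j). Qed.
Lemma sgK m a : sg m (sg m a) = a.
Proof. by rewrite /sg; case: (odd m); rewrite ?opprK. Qed.
Lemma sg_sum m (I : Type) (r : seq I) (P : pred I) (F : I -> X) :
  sg m (\sum_(i <- r | P i) F i) = \sum_(i <- r | P i) sg m (F i).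
Proof. exact: (big_morph (sg m) (sgD m) (sg0 m)). Qed.
Lemma arr (l m1 m2 r : X) : l + (m1 + (m2 + r)) = 0 -> m1 + m2 = - (l + r).
Proof.
move=> h; apply: (addrI (l + r)); rewrite subrr -h -!addrA; congr (_ + _).
by rewrite addrC -!addrA.
Qed.
Lemma tele n (a : nat -> X) : \sum_(0 <= m < n) (a m - a m.+1) = a 0%N - a n.
Proof.
elim: n => [|n IH]; first by rewrite big_geq // subrr.
rewrite big_nat_recr //= IH addrA -(addrA (a 0%N)) addNr addr0 //.
Qed.
End Sg.

Section Prism.
Variables (T : Type) (X : zmodType) (k : nat) (sigma : ('I_k.+2 -> T) -> X) (p : T -> T).
Definition sig (u : nat -> T) := sigma (fun j : 'I_k.+2 => u (nat_of_ord j)).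
Definition W (m : nat) (u : nat -> T) := fun t : nat => if (t <= m)%N then p (u t) else u t.-1.
Definition A (m : nat) (u : nat -> T) := fun t : nat => if (t < m)%N then p (u t) else u t.
Definition Psi (u : nat -> T) := \sum_(0 <= m < k.+1) sg m (sig (W m u)).

Lemma sig_ext u v : (forall t, (t < k.+2)%N -> u t = v t) -> sig u = sig v.
Proof.
move=> h; rewrite /sig; congr sigma; apply: boolp.funext => j.
exact/h/ltn_ord.
Qed.

Lemma bumpE j t : bump j t = if (j <= t)%N then t.+1 else t.
Proof. by rewrite /bump; case: leqP. Qed.

Ltac solveF := rewrite /W /A;
  repeat (case: leqP => ?); try (exfalso; lia);
  try (do 2 f_equal; lia); try (f_equal; lia).

Lemma F1 m j u : (j < m)%N -> forall t, W m u (bump j t) = W m.-1 (fun t => u (bump j t)) t.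
Proof. move=> hj t; rewrite !bumpE; case: (leqP j t) => ?; solveF; rewrite bumpE; solveF. Qed.

Lemma F2 m u t : W m u (bump m t) = A m u t.
Proof. rewrite !bumpE; case: (leqP m t) => ?; solveF. Qed.

Lemma F3 m u t : W m u (bump m.+1 t) = A m.+1 u t.
Proof. rewrite !bumpE; case: (leqP m.+1 t) => ?; solveF. Qed.

Lemma F4 m j u : (m.+1 < j)%N -> forall t, W m u (bump j t) = W m (fun t => u (bump j.-1 t)) t.
Proof. move=> hj t; rewrite !bumpE; case: (leqP j t) => ?; solveF; rewrite bumpE; solveF. Qed.

Lemma prism (hc : forall v, \sum_(0 <= j < k.+3) sg j (sig (fun t => v (bump j t))) = 0) u :
  \sum_(0 <= i < k.+2) sg i (Psi (fun t => u (bump i t))) = sig u - sig (fun t => p (u t)).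
Proof.
pose F m j := sig (W m (fun t => u (bump j t))).
pose a m := sig (A m u).
have E : forall m, (0 <= m < k.+2)%N -> a m - a m.+1 =
   - (\sum_(0 <= j < m) sg m (sg j (F m.-1 j)) + \sum_(m.+2 <= j < k.+3) sg m (sg j (F m j.-1))).
  move=> m /andP [_ hm].
  have := hc (W m u); move/(congr1 (sg m)); rewrite sg0 sg_sum.
  rewrite (big_cat_nat _ (n:=m)) //=; last by lia.
  rewrite [X in _ + X]big_ltn; last by lia.
  rewrite [X in _ + (_ + X)]big_ltn; last by lia.
  rewrite sgK (sgC m m.+1) sgS sgK.
  have -> : sig (fun t => W m u (bump m t)) = a m
    by rewrite /a; congr (sig _); apply: boolp.funext => t; exact: F2.
  have -> : sig (fun t => W m u (bump m.+1 t)) = a m.+1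
    by rewrite /a; congr (sig _); apply: boolp.funext => t; exact: F3.
  move/arr => ->.
  congr (- (_ + _)).
  - apply: eq_big_nat => j /andP [_ hj]; congr (sg m (sg j _)).
    by apply: sig_ext => t _; rewrite F1.
  - apply: eq_big_nat => j /andP [hj _]; congr (sg m (sg j _)).
    by apply: sig_ext => t _; rewrite F4.
have tot : \sum_(0 <= m < k.+2) (a m - a m.+1) = a 0%N - a k.+2 by exact: tele.
have a0 : a 0%N = sig u by apply: sig_ext => t _; rewrite /A.
have aK : a k.+2 = sig (fun t => p (u t)) by apply: sig_ext => t ht; rewrite /A ht.
rewrite -a0 -aK -tot.
rewrite (eq_big_nat _ _ E) sumrN big_split /=.
rewrite [X in _ = - (X + _)]big_nat_recl // [X in _ = - (X + _ + _)]big_geq // add0r.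
rewrite [X in _ = - (_ + X)]big_nat_recr //= [X in _ = - (_ + (_ + X))]big_geq // addr0.
have L : forall m, \sum_(0 <= j < m.+1) sg m.+1 (sg j (F m.+1.-1 j)) =
                 - \sum_(0 <= j < m.+1) sg m (sg j (F m j)).
  by move=> m; rewrite -sumrN; apply: eq_bigr => j _; rewrite sgS.
have R : forall m, (0 <= m < k.+1)%N -> \sum_(m.+2 <= j < k.+3) sg m (sg j (F m j.-1)) =
                 - \sum_(m.+1 <= j < k.+2) sg m (sg j (F m j)).
  move=> m _; rewrite -(addn1 m.+1) big_addn -sumrN.
  have -> : (k.+3 - 1 = k.+2)%N by lia.
  by apply: eq_bigr => j _; rewrite addn1 /= sgS sgN.
rewrite (eq_bigr _ (fun m _ => L m)) (eq_big_nat _ _ R) !sumrN -opprD opprK -big_split /=.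
have -> : \sum_(0 <= i < k.+1) (\sum_(0 <= j < i.+1) sg i (sg j (F i j)) +
           \sum_(i.+1 <= j < k.+2) sg i (sg j (F i j))) =
          \sum_(0 <= i < k.+1) \sum_(0 <= j < k.+2) sg i (sg j (F i j)).
  apply: eq_big_nat => i /andP [_ hi]; rewrite -big_cat_nat //; lia.
rewrite exchange_big_nat /Psi; apply: eq_bigr => j _.
by rewrite sg_sum; apply: eq_bigr => i _; rewrite sgC.
Qed.

Lemma Psi_ext u v : (forall t, (t < k.+1)%N -> u t = v t) -> Psi u = Psi v.
Proof.
move=> h; apply: eq_big_nat => m /andP [_ hm]; congr sg; apply: sig_ext => t ht.
by rewrite /W; case: ifP => htm; rewrite h //; lia.
Qed.

End Prism.

Lemma dcoE (G : topGroupType) (X : zmodType) n (phi : ('I_n.+1 -> G) -> X) x :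
  dco phi x = \sum_(i < n.+2) sg i (phi (fun j => x (lift i j))).
Proof. by []. Qed.

Lemma lift_inord k (i : 'I_k.+2) t : (t < k.+1)%N -> lift i (inord t) = inord (bump i t) :> 'I_k.+2.
Proof.
move=> ht; apply: val_inj; rewrite /= !inordK //.
by have := ltn_ord i; rewrite bumpE; case: (leqP i t) => _; lia.
Qed.

Set Implicit Arguments. Unset Strict Implicit. Unset Printing Implicit Defensive.
Import GRing.Theory.
Local Open Scope ring_scope.

Section Add.
Variables (X Y : zmodType) (phi : X -> Y) (hadd : forall a b, phi (a + b) = phi a + phi b).
Lemma ad0 : phi 0 = 0.
Proof. by apply: (addrI (phi 0)); rewrite -hadd !addr0. Qed.
Lemma adN a : phi (- a) = - phi a.
Proof. by apply: (addrI (phi a)); rewrite -hadd !subrr ad0. Qed.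
Lemma adB a b : phi (a - b) = phi a - phi b.
Proof. by rewrite hadd adN. Qed.
Lemma ad_sum (I : Type) (r : seq I) (P : pred I) (F : I -> X) :
  phi (\sum_(i <- r | P i) F i) = \sum_(i <- r | P i) phi (F i).
Proof. exact: (big_morph phi hadd ad0). Qed.
End Add.

Section LC.
Variable G : topologicalType.
Definition lconst (X : Type) (n : nat) (phi : ('I_n.+1 -> G) -> X) : Prop :=
  forall x, exists U : 'I_n.+1 -> set G,
    (forall i, open (U i) /\ U i (x i)) /\
    (forall y, (forall i, U i (y i)) -> phi y = phi x).

Lemma lconst_comp (X Z : Type) n (F : ('I_n.+1 -> G) -> X) (Phi : X -> Z) :
  lconst F -> lconst (fun x => Phi (F x)).
Proof. by move=> h x; have [U [h1 h2]] := h x; exists U; split => // y /h2 ->. Qed.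

Lemma lconst_ext (X : Type) n (F F' : ('I_n.+1 -> G) -> X) :
  (forall x, F x = F' x) -> lconst F -> lconst F'.
Proof.
move=> e h x; have [U [h1 h2]] := h x; exists U; split => // y /h2.
by rewrite !e.
Qed.

Lemma lconst_add (X : zmodType) n (F F' : ('I_n.+1 -> G) -> X) :
  lconst F -> lconst F' -> lconst (fun x => F x + F' x).
Proof.
move=> h h' x; have [U [h1 h2]] := h x; have [U' [h1' h2']] := h' x.
exists (fun i => U i `&` U' i)%classic; split.
  move=> i; have [o1 u1] := h1 i; have [o2 u2] := h1' i; split; first exact: openI.
  by split.
by move=> y hy; rewrite h2 ?h2' // => i; have [] := hy i.
Qed.

Lemma lconst_cst (X : Type) n (c : X) : lconst (fun _ : 'I_n.+1 -> G => c).
Proof. by move=> x; exists (fun _ => setT); split => // i; split => //; exact: openT. Qed.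

Lemma lconst_sum (X : zmodType) n (J : Type) (s : seq J) (F : J -> ('I_n.+1 -> G) -> X) :
  (forall j, lconst (F j)) -> lconst (fun x => \sum_(j <- s) F j x).
Proof.
move=> h; elim: s => [|a s IH].
  by apply: (lconst_ext (F := fun _ => 0)) => [x|]; rewrite ?big_nil //; exact: lconst_cst.
apply: (lconst_ext (F := fun x => F a x + \sum_(j <- s) F j x)) => [x|].
  by rewrite big_cons.
exact: lconst_add.
Qed.

Lemma open_fin (J : eqType) (s : seq J) (P : J -> bool) (U : J -> set G) :
  (forall j, open (U j)) -> open (fun b => forall j, j \in s -> P j -> U j b).
Proof.
move=> hU; elim: s => [|a s IH].
  have -> : (fun b => forall j, j \in [::] -> P j -> U j b) = setT.
    by apply: boolp.funext => b; apply: boolp.propext; split => // _ j.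
  exact: openT.
have -> : (fun b => forall j, j \in a :: s -> P j -> U j b) =
   ((fun b => P a -> U a b) `&` (fun b => forall j, j \in s -> P j -> U j b))%classic.
  apply: boolp.funext => b; apply: boolp.propext; split.
    by move=> h; split; [apply: h; rewrite inE eqxx | move=> j js; apply: h; rewrite inE js orbT].
  by move=> [h1 h2] j; rewrite inE => /orP [/eqP -> //|]; exact: h2.
apply: openI => //.
case: (P a).
  by have -> : (fun b => true -> U a b) = U a by apply: boolp.funext => b; apply: boolp.propext; split => //; apply.
have -> : (fun b => false -> U a b) = setT by apply: boolp.funext => b; apply: boolp.propext.
exact: openT.
Qed.
End LC.

Set Implicit Arguments. Unset Strict Implicit. Unset Printing Implicit Defensive.
Import GRing.Theory.
Local Open Scope ring_scope.

Section Main.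
Variables (G : topGroupType) (H : set G) (X Y : zmodType)
  (actX : G -> X -> X) (actY : G -> Y -> Y) (f : X -> Y)
  (I : finType) (L : I -> G) (pi : G -> G).
Local Notation "x ** y" := (@monoid.mul G x y) (at level 40, left associativity).
Local Notation "x ^-1g" := (@monoid.inv G x) (at level 3).
Local Notation one := (@monoid.one G).

Hypothesis hm : continuous (fun p : G * G => p.1 ** p.2).
Hypothesis H1 : H one.
Hypothesis HM : forall x y, H x -> H y -> H (x ** y).
Hypothesis HV : forall x, H x -> H (x ^-1g).
Hypothesis Hopen : open H.
Hypothesis aXD : forall g x y, actX g (x + y) = actX g x + actX g y.
Hypothesis aYD : forall g x y, actY g (x + y) = actY g x + actY g y.
Hypothesis aYM : forall g h x, actY (g ** h) x = actY g (actY h x).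
Hypothesis fadd : forall x y, f (x + y) = f x + f y.
Hypothesis fH : forall h x, H h -> f (actX h x) = actY h (f x).
Hypothesis tr : left_transversal H L.
Hypothesis ret : right_retraction H pi.

Lemma lc_comp (q1 q2 : G -> G) : lc q1 -> lc q2 -> lc (fun b => q2 (q1 b)).
Proof.
move=> h1 h2 a V oV Va.
have [U2 [o2 u2 m2]] := h2 (q1 a) V oV Va.
have [U1 [o1 u1 m1]] := h1 a U2 o2 u2.
by exists U1; split => // y /m1 /m2.
Qed.

Lemma open_rmul (S : set G) d : open S -> open (fun y => S (y ** d)).
Proof.
move=> oS; have -> : (fun y => S (y ** d)) = ((fun y => y ** d) @^-1` S)%classic by [].
by apply: open_comp => // y _; exact: rmul_cont.
Qed.

Lemma pi_lc : lc pi.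
Proof.
move=> b V oV Vb.
exists ((fun y => H (y ** b^-1g)) `&` (fun y => V (y ** (b^-1g ** pi b))))%classic.
split.
- by apply: openI; apply: open_rmul.
- split; first by rewrite monoid.mulgV.
  by rewrite monoid.mulgA monoid.mulgV monoid.mul1g.
- move=> y [hy vy].
  have -> : y = (y ** b^-1g) ** b by rewrite monoid.mulgVK.
  by rewrite (proj2 (ret b)) // -monoid.mulgA.
Qed.

Lemma lmul_lc a : lc (fun b => a ** b).
Proof. by apply: cont_lc; exact: lmul_cont. Qed.

Lemma lconst_base k (sigma : ('I_k.+2 -> G) -> X) (hs : loc_const sigma) m a :
  lconst (fun x : 'I_k.+1 -> G => sig sigma (W pi m (fun t => a ** x (inord t)))).
Proof.
move=> x.
pose sj (j' : 'I_k.+2) : 'I_k.+1 := inord (if (j' <= m)%N then nat_of_ord j' else j'.-1).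
pose qj (j' : 'I_k.+2) : G -> G := if (j' <= m)%N then (fun b => pi (a ** b)) else (fun b => a ** b).
have eW : forall y : 'I_k.+1 -> G, sig sigma (W pi m (fun t => a ** y (inord t))) =
   sigma (fun j' => qj j' (y (sj j'))).
  move=> y; rewrite /sig /W /qj /sj; congr sigma; apply: boolp.funext => j'.
  by case: ifP.
have [V [hV1 hV2]] := hs (fun j' => qj j' (x (sj j'))).
have lq : forall j', lc (qj j').
  move=> j'; rewrite /qj; case: ifP => _; last exact: lmul_lc.
  by apply: (lc_comp (q1 := fun b => a ** b)); [exact: lmul_lc | exact: pi_lc].
have : forall j', exists Uq : set G, [/\ open Uq, Uq (x (sj j')) &
         forall y, Uq y -> V j' (qj j' y)].
  by move=> j'; have [o v] := hV1 j'; exact: lq.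
case/boolp.choice => Uq hUq.
exists (fun j b => forall j', j' \in index_enum 'I_k.+2 -> (sj j' == j) -> Uq j' b).
split.
  move=> j; split.
    by apply: open_fin => j'; have [] := hUq j'.
  by move=> j' _ /eqP <-; have [] := hUq j'.
move=> y hy; rewrite !eW; apply: hV2 => j'.
have [_ _ h3] := hUq j'; apply: h3.
by apply: (hy (sj j')) => //; rewrite mem_index_enum.
Qed.

Lemma cor_equiv n (psi : ('I_n.+1 -> G) -> X)
  (Hpsi : forall h y, H h -> psi (fun j => h ** y j) = actX h (psi y)) g x :
  \sum_i actY (L i) (f (psi (fun j => (L i)^-1g ** (g ** x j)))) =
  actY g (\sum_i actY (L i) (f (psi (fun j => (L i)^-1g ** x j)))).
Proof.
have : forall i, exists j, H ((L j)^-1g ** (g^-1g ** L i)).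
  by move=> i; have [j [hj _]] := tr (g^-1g ** L i); exists j.
case/boolp.choice => tau htau.
have tinj : injective tau.
  move=> i1 i2 e.
  have h1 := htau i1; have h2 := htau i2; rewrite e in h1.
  have h12 : H ((L i1)^-1g ** L i2).
    have := HM (HV h1) h2.
    by rewrite monoid.invgM -monoid.mulgA monoid.mulKg monoid.invgM monoid.invgK
       -monoid.mulgA monoid.mulVKg.
  have [j0 [_ uq]] := tr (L i2).
  rewrite -(uq i1 h12); apply: uq.
  by rewrite monoid.mulVg.
rewrite (ad_sum (aYD g)) [RHS](reindex_inj tinj); apply: eq_bigr => i _.
set j := tau i.
have hh : H ((L j)^-1g ** (g^-1g ** L i)) := htau i.
set k := ((L j)^-1g ** (g^-1g ** L i))^-1g.
have Hk : H k := HV hh.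
have ek : k = ((L i)^-1g ** g) ** L j.
  by rewrite /k monoid.invgM monoid.invgK monoid.invgM monoid.invgK.
have -> : (fun t => (L i)^-1g ** (g ** x t)) = (fun t => k ** ((L j)^-1g ** x t)).
  apply: boolp.funext => t.
  by rewrite ek -monoid.mulgA monoid.mulVKg -monoid.mulgA.
rewrite Hpsi // fH // -aYM -aYM; congr actY.
by rewrite ek monoid.mulgA monoid.mulVKg.
Qed.

Hypothesis aXM : forall g h x, actX (g ** h) x = actX g (actX h x).

Lemma act_sg (Z W : zmodType) (phi : Z -> W) (hadd : forall a b, phi (a + b) = phi a + phi b) m a :
  phi (sg m a) = sg m (phi a).
Proof. by rewrite /sg; case: (odd m); rewrite ?(adN hadd). Qed.

Theorem main_lemma n (sigma : ('I_n.+1 -> G) -> X) :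
  cocycle actX sigma ->
  cohomologous actY
    (cor_cochain actY L pi (push f (res_cochain sigma)))
    (push (ftilde actX actY L f) sigma).
Proof.
case=> seq sloc scoc.
have key : forall x, cor_cochain actY L pi (push f (res_cochain sigma)) x
   - push (ftilde actX actY L f) sigma x =
   \sum_i actY (L i) (f (sigma (fun j => pi ((L i)^-1g ** x j)) - sigma (fun j => (L i)^-1g ** x j))).
  move=> x; rewrite /cor_cochain /push /res_cochain /ftilde -sumrB; apply: eq_bigr => i _.
  by rewrite (seq ((L i)^-1g)) (adB fadd) (adB (aYD (L i))).
case: n sigma seq sloc scoc key => [|k] sigma seq sloc scoc key.
  have cst : forall y z : 'I_1 -> G, sigma y = sigma z.
    move=> y z; have := scoc (fun j : 'I_2 => if j == ord0 then y ord0 else z ord0).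
    rewrite dcoE big_ord_recl big_ord1 /=.
    have -> : (fun j : 'I_1 => if lift ord0 j == ord0 then y ord0 else z ord0) = z.
      by apply: boolp.funext => j; rewrite (ord1 j).
    have -> : (fun j : 'I_1 => if lift (lift ord0 ord0) j == ord0 then y ord0 else z ord0) = y.
      by apply: boolp.funext => j; rewrite (ord1 j).
    by move/eqP; rewrite /sg /= subr_eq0 => /eqP.
  move=> x /=; apply/eqP; rewrite -subr_eq0 key; apply/eqP.
  by apply: big1 => i _; rewrite [X in X - _](cst _ (fun j => (L i)^-1g ** x j)) subrr (ad0 fadd) (ad0 (aYD _)).
pose psi (y : 'I_k.+1 -> G) : X := - Psi sigma pi (fun t => y (inord t)).
pose chi (x : 'I_k.+1 -> G) : Y := \sum_i actY (L i) (f (psi (fun j => (L i)^-1g ** x j))).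
have Hpsi : forall h y, H h -> psi (fun j => h ** y j) = actX h (psi y).
  move=> h y hh; rewrite /psi (adN (aXD h)) /Psi (ad_sum (aXD h)); congr (- _).
  apply: eq_bigr => m _; rewrite (act_sg (aXD h)); congr sg.
  rewrite /sig -seq; congr sigma; apply: boolp.funext => j.
  by rewrite /W; case: ifP => _ //; rewrite (proj2 (ret _)).
have hc : forall v, \sum_(0 <= j < k.+3) sg j (sig sigma (fun t => v (bump j t))) = 0.
  by move=> v; have := scoc (fun j : 'I_k.+3 => v j); rewrite dcoE big_mkord.
have dpsi : forall y : 'I_k.+2 -> G,
    \sum_(i < k.+2) sg i (psi (fun j => y (lift i j))) = sigma (fun j => pi (y j)) - sigma y.
  move=> y; rewrite /psi.
  under eq_bigr => i _ do rewrite sgN.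
  rewrite sumrN.
  pose yy t := y (inord t).
  have e : forall i : 'I_k.+2, sg i (Psi sigma pi (fun t => y (lift i (inord t)))) =
                              sg i (Psi sigma pi (fun t => yy (bump i t))).
    by move=> i; congr sg; apply: Psi_ext => t ht; rewrite lift_inord.
  rewrite (eq_bigr _ (fun i _ => e i)).
  rewrite -(big_mkord xpredT (fun i => sg i (Psi sigma pi (fun t => yy (bump i t))))).
  rewrite prism // opprB /sig /yy.
  by congr (sigma _ - sigma _); apply: boolp.funext => j; rewrite inord_val.
exists chi; split.
- by move=> g x; rewrite /chi; apply: cor_equiv.
- apply: lconst_sum => i.
  apply: (lconst_comp (F := fun x => psi (fun j => (L i)^-1g ** x j)) (fun v => actY (L i) (f v))).
  apply: (lconst_comp (F := fun x => Psi sigma pi (fun t => (L i)^-1g ** x (inord t))) (fun v => - v)).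
  apply: lconst_sum => m.
  apply: (lconst_comp (F := fun x => sig sigma (W pi m (fun t => (L i)^-1g ** x (inord t)))) (sg m)).
  exact: lconst_base.
- move=> x; rewrite key dcoE /chi.
  under [RHS]eq_bigr => i _ do rewrite sg_sum.
  rewrite exchange_big /=; apply: eq_bigr => l _.
  under eq_bigr => i _ do rewrite -(act_sg (aYD (L l))) -(act_sg fadd).
  by rewrite -(ad_sum (aYD (L l))) -(ad_sum fadd) (dpsi (fun j => (L l)^-1g ** x j)).
Qed.

End Main.


Local Open Scope ring_scope.

Theorem lemma6p4 (G : topGroupType) (H : set G) (X Y : zmodType)
  (actX : G -> X -> X) (actY : G -> Y -> Y) (f : X -> Y)
  (I : finType) (L : I -> G) (pi : G -> G)
  (n : nat) (sigma : ('I_n.+1 -> G) -> X) :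
  profinite G ->
  open_subgroup H ->
  discrete_module actX ->
  discrete_module actY ->
  (forall x y, f (x + y) = f x + f y) ->
  (forall h x, H h -> f (actX h x) = actY h (f x)) ->
  left_transversal H L ->
  right_retraction H pi ->
  cocycle actX sigma ->
  cohomologous actY
    (cor_cochain actY L pi (push f (res_cochain sigma)))
    (push (ftilde actX actY L f) sigma).
Proof.
move=> [hm _ _ _ _] [H1 HM HV Ho] [aXD _ aXM _] [aYD _ aYM _] fadd fH tr ret coc.
exact: (main_lemma hm H1 HM HV Ho aXD aYD aYM fadd fH tr ret coc).
Qed.
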